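(* Let $b(r)$ be a smooth positive function on an open interval of $r>0$ and consider the metric $ds^2=-b^2dt^2+b^{-2}dr^2+r^2(d\theta^2+\sin^2\theta\,d\phi^2)$. Let $\kappa_1,\kappa_2$ be constants, set $\Lambda=-\kappa_1$, $\lambda=-\kappa_2$, and let $$K_{kl}=\kappa_2r^2\,u_ku_l+(\kappa_1+2\kappa_2r^2)g_{kl}-\kappa_2r^2\,\chi_k\chi_l .$$ Then the vacuum conformal Killing gravity equations $R_{kl}-\tfrac12Rg_{kl}=K_{kl}$ hold if and only if there is a constant $M$ such that $$b^2(r)=1-\frac{2M}{r}-\frac{\Lambda}{3}r^2-\frac{\lambda}{5}r^4 .$$
   Context: $u_k$ is the unit timelike covector with components $u_0=-b$ and all others zero; $\chi_k$ is the unit radial covector with $\chi_r=1/b$ and all others zero. $R_{kl}$ is the Ricci tensor and $R$ the scalar curvature. The tensor $K_{kl}$ is the divergence-free conformal Killing tensor $\mathsf A u_ku_l+\mathsf Bg_{kl}+\mathsf C\chi_k\chi_l$ with $\mathsf A=\kappa_2 f_2^2-2\kappa_3 b^2$, $\mathsf B=\kappa_1+2\kappa_2 f_2^2+\kappa_3 b^2$, $\mathsf C=-\kappa_2 f_2^2$, specialized to $f_2=r$ and $\kappa_3=0$ (the case $h=bf_1=1$). *)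

(* Defs.v *)
From Stdlib Require Import Reals.
From Coquelicot Require Import Coquelicot.
Open Scope R_scope.

(* Coordinates x : nat -> R with x 0 = t, x 1 = r, x 2 = theta, x 3 = phi. *)
Definition coords := nat -> R.

Definition sum4 (f : nat -> R) : R := f 0%nat + f 1%nat + f 2%nat + f 3%nat.

Definition pd (f : coords -> R) (k : nat) (x : coords) : R :=
  Derive (fun h => f (fun i => if Nat.eqb i k then h else x i)) (x k).

(* A metric is given by its covariant components g_{kl}(x) and its inverse
   g^{kl}(x). *)
Definition tensor2 := coords -> nat -> nat -> R.

Definition christoffel (g ginv : tensor2) (x : coords) (m k l : nat) : R :=
  / 2 * sum4 (fun n => ginv x m n *
     (pd (fun y => g y n l) k x + pd (fun y => g y n k) l x
      - pd (fun y => g y k l) n x)).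

Definition ricci (g ginv : tensor2) (x : coords) (k l : nat) : R :=
  sum4 (fun m => pd (fun y => christoffel g ginv y m k l) m x)
  - sum4 (fun m => pd (fun y => christoffel g ginv y m k m) l x)
  + sum4 (fun m => sum4 (fun n =>
        christoffel g ginv x m m n * christoffel g ginv x n k l
      - christoffel g ginv x m l n * christoffel g ginv x n k m)).

Definition scalar_curv (g ginv : tensor2) (x : coords) : R :=
  sum4 (fun k => sum4 (fun l => ginv x k l * ricci g ginv x k l)).

Definition einstein (g ginv : tensor2) (x : coords) (k l : nat) : R :=
  ricci g ginv x k l - / 2 * scalar_curv g ginv x * g x k l.

Definition diag_metric (d : coords -> nat -> R) : tensor2 :=
  fun x k l => if Nat.eqb k l then d x k else 0.
Definition diag_inv (d : coords -> nat -> R) : tensor2 :=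
  fun x k l => if Nat.eqb k l then / d x k else 0.

Definition sss_diag (b : R -> R) (x : coords) (k : nat) : R :=
  match k with
  | 0%nat => - (b (x 1%nat)) ^ 2
  | 1%nat => / (b (x 1%nat)) ^ 2
  | 2%nat => (x 1%nat) ^ 2
  | _ => (x 1%nat) ^ 2 * (sin (x 2%nat)) ^ 2
  end.

Definition sss_g (b : R -> R) : tensor2 := diag_metric (sss_diag b).
Definition sss_ginv (b : R -> R) : tensor2 := diag_inv (sss_diag b).

(* unit timelike covector u_k: u_0 = -b; unit radial covector chi_r = 1/b *)
Definition u_cov (b : R -> R) (x : coords) (k : nat) : R :=
  if Nat.eqb k 0 then - b (x 1%nat) else 0.
Definition chi_cov (b : R -> R) (x : coords) (k : nat) : R :=
  if Nat.eqb k 1 then / b (x 1%nat) else 0.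

Definition K_tensor (b : R -> R) (kappa1 kappa2 : R) (x : coords) (k l : nat) : R :=
  let r := x 1%nat in
  kappa2 * r ^ 2 * u_cov b x k * u_cov b x l
  + (kappa1 + 2 * kappa2 * r ^ 2) * sss_g b x k l
  - kappa2 * r ^ 2 * chi_cov b x k * chi_cov b x l.

(* Main.v *)
Require Import Defs.
From Stdlib Require Import Reals Lra Lia.
From Coquelicot Require Import Coquelicot.
Open Scope R_scope.

Definition dg (b db : R -> R) (n l k : nat) (y : coords) : R :=
  let r := y 1%nat in let th := y 2%nat in
  if Nat.eqb n l then
    match n, k with
    | 0, 1 => - (2 * b r * db r)
    | 1, 1 => - (2 * db r) / (b r) ^ 3
    | 2, 1 => 2 * r
    | S (S (S _)), 1 => 2 * r * (sin th) ^ 2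
    | S (S (S _)), 2 => r ^ 2 * (2 * sin th * cos th)
    | _, _ => 0
    end
  else 0.

Ltac nz := repeat first [ assumption | apply Rmult_integral_contrapositive_currified
  | apply Rinv_neq_0_compat | apply Ropp_neq_0_compat | apply pow_nonzero | apply R1_neq_R0 | lra ].

Lemma Derive_cst' (c x : R) : Derive (fun _ : R => c) x = 0.
Proof. apply Derive_const. Qed.

Lemma dg_val b db y n l k :
  is_derive b (y 1%nat) (db (y 1%nat)) -> b (y 1%nat) <> 0 ->
  pd (fun z => sss_g b z n l) k y = dg b db n l k y.
Proof.
  intros Hd Hb.
  assert (Hd' : Derive (fun z => b z) (y 1%nat) = db (y 1%nat)) by (apply is_derive_unique; exact Hd).
  assert (He : ex_derive (fun z => b z) (y 1%nat)) by (eexists; exact Hd).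
  unfold pd, sss_g, diag_metric, dg.
  destruct (Nat.eqb n l); [| apply Derive_cst'].
  destruct n as [|[|[|n]]]; destruct k as [|[|[|k]]];
   cbn [Nat.eqb sss_diag]; try apply Derive_cst';
   (apply is_derive_unique; auto_derive; [ repeat split; nz | rewrite ?Hd'; field; nz ]).
Qed.


Definition Chr (b db : R -> R) (y : coords) (m k l : nat) : R :=
  / 2 * sum4 (fun n => sss_ginv b y m n * (dg b db n l k y + dg b db n k l y - dg b db k l n y)).

Lemma chr_val b db y m k l :
  is_derive b (y 1%nat) (db (y 1%nat)) -> b (y 1%nat) <> 0 ->
  christoffel (sss_g b) (sss_ginv b) y m k l = Chr b db y m k l.
Proof.
  intros Hd Hb. unfold christoffel, Chr, sum4.
  rewrite !(dg_val b db); auto.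
Qed.

Lemma pd_chr (I : R -> Prop) b db x m k l j :
  (forall r, I r -> locally r I) ->
  (forall r, I r -> is_derive b r (db r)) -> (forall r, I r -> b r <> 0) ->
  I (x 1%nat) ->
  pd (fun y => christoffel (sss_g b) (sss_ginv b) y m k l) j x =
  pd (fun y => Chr b db y m k l) j x.
Proof.
  intros Io Hd Hb Ix. unfold pd. apply Derive_ext_loc.
  destruct (Nat.eqb 1 j) eqn:E.
  - apply Nat.eqb_eq in E. subst j.
    apply (filter_imp I); [| now apply Io].
    intros h Ih. apply chr_val; cbn [Nat.eqb]; auto.
  - apply filter_forall. intros h. apply chr_val; rewrite E; auto.
Qed.


Definition Ric (b db ddb : R -> R) (x : coords) (k l : nat) : R :=
  let r := x 1%nat in let s := sin (x 2%nat) in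
  let A := db r ^ 2 + b r * ddb r + 2 * b r * db r / r in
  match k, l with
  | 0, 0 => b r ^ 2 * A
  | 1, 1 => - A / b r ^ 2
  | 2, 2 => 1 - b r ^ 2 - 2 * r * b r * db r
  | 3, 3 => s ^ 2 * (1 - b r ^ 2 - 2 * r * b r * db r)
  | _, _ => 0
  end.

Ltac elim_der H1 H2 H3 H4 Hsd :=
  rewrite ?H1, ?H2, ?H3, ?H4;
  repeat (match goal with |- context [Derive ?F ?z] =>
    erewrite (is_derive_unique F z);
      [ | auto_derive; [ repeat split; first [ eassumption | nz ] | reflexivity ] ] end;
    rewrite ?H1, ?H2, ?H3, ?H4).

Lemma ricci_val (I : R -> Prop) b db ddb x k l :
  (forall r, I r -> locally r I) ->
  (forall r, I r -> is_derive b r (db r)) -> 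
  (forall r, I r -> is_derive db r (ddb r)) -> 
  (forall r, I r -> b r <> 0) -> (forall r, I r -> r <> 0) ->
  I (x 1%nat) -> sin (x 2%nat) <> 0 -> (k < 4)%nat -> (l < 4)%nat ->
  ricci (sss_g b) (sss_ginv b) x k l = Ric b db ddb x k l.
Proof.
  intros Io Hd Hdd Hb Hr Ix Hs Hk Hl.
  assert (Hb0 := Hb _ Ix). assert (Hr0 := Hr _ Ix).
  assert (Ed1 : ex_derive (fun z => b z) (x 1%nat)) by (eexists; apply Hd; exact Ix).
  assert (Ed2 : ex_derive (fun z => db z) (x 1%nat)) by (eexists; apply Hdd; exact Ix).
  assert (H1 : Derive (fun z => b z) (x 1%nat) = db (x 1%nat)) by (apply is_derive_unique; auto).
  assert (H2 : Derive b (x 1%nat) = db (x 1%nat)) by (apply is_derive_unique; auto).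
  assert (H3 : Derive (fun z => db z) (x 1%nat) = ddb (x 1%nat)) by (apply is_derive_unique; auto).
  assert (H4 : Derive db (x 1%nat) = ddb (x 1%nat)) by (apply is_derive_unique; auto).
  assert (Hsc : sin (x 2%nat) ^ 2 = 1 - cos (x 2%nat) ^ 2) by (rewrite <- (sin2_cos2 (x 2%nat)); unfold Rsqr; ring).
  unfold ricci, sum4; cbv beta.
  rewrite !(pd_chr I b db x); auto.
  rewrite !(chr_val b db x); auto.
  unfold pd, sum4.
  destruct k as [|[|[|[|k]]]]; [| | | | lia];
  destruct l as [|[|[|[|l]]]]; try lia; 
  unfold Chr, dg, sss_ginv, diag_inv, sss_diag, sum4, Ric; cbn [Nat.eqb];
  elim_der H1 H2 H3 H4 Hs; field [Hsc]; nz.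
Qed.


Definition Ein (b db ddb : R -> R) (x : coords) (k l : nat) : R :=
  let r := x 1%nat in let s := sin (x 2%nat) in
  match k, l with
  | 0, 0 => b r ^ 2 * (1 - b r ^ 2 - 2 * r * b r * db r) / r ^ 2
  | 1, 1 => (2 * r * b r * db r + b r ^ 2 - 1) / (r ^ 2 * b r ^ 2)
  | 2, 2 => r ^ 2 * (db r ^ 2 + b r * ddb r) + 2 * r * b r * db r
  | 3, 3 => s ^ 2 * (r ^ 2 * (db r ^ 2 + b r * ddb r) + 2 * r * b r * db r)
  | _, _ => 0
  end.

Lemma einstein_val (I : R -> Prop) b db ddb x k l :
  (forall r, I r -> locally r I) ->
  (forall r, I r -> is_derive b r (db r)) -> 
  (forall r, I r -> is_derive db r (ddb r)) -> 
  (forall r, I r -> b r <> 0) -> (forall r, I r -> r <> 0) ->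
  I (x 1%nat) -> sin (x 2%nat) <> 0 -> (k < 4)%nat -> (l < 4)%nat ->
  einstein (sss_g b) (sss_ginv b) x k l = Ein b db ddb x k l.
Proof.
  intros Io Hd Hdd Hb Hr Ix Hs Hk Hl.
  assert (Hb0 := Hb _ Ix). assert (Hr0 := Hr _ Ix).
  unfold einstein, scalar_curv, sum4; cbv beta.
  rewrite !(ricci_val I b db ddb x); auto; try lia.
  destruct k as [|[|[|[|k]]]]; [| | | | lia];
  destruct l as [|[|[|[|l]]]]; try lia;
  unfold Ein, Ric, sss_g, sss_ginv, diag_metric, diag_inv, sss_diag; cbn [Nat.eqb];
  field; nz.
Qed.

Definition Kc (b : R -> R) (k1 k2 : R) (x : coords) (k l : nat) : R :=
  let r := x 1%nat in let s := sin (x 2%nat) in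
  match k, l with
  | 0, 0 => - b r ^ 2 * (k1 + k2 * r ^ 2)
  | 1, 1 => (k1 + k2 * r ^ 2) / b r ^ 2
  | 2, 2 => (k1 + 2 * k2 * r ^ 2) * r ^ 2
  | 3, 3 => (k1 + 2 * k2 * r ^ 2) * r ^ 2 * s ^ 2
  | _, _ => 0
  end.

Lemma K_val b k1 k2 x k l : b (x 1%nat) <> 0 -> (k < 4)%nat -> (l < 4)%nat ->
  K_tensor b k1 k2 x k l = Kc b k1 k2 x k l.
Proof.
  intros Hb Hk Hl.
  destruct k as [|[|[|[|k]]]]; [| | | | lia];
  destruct l as [|[|[|[|l]]]]; try lia;
  unfold K_tensor, Kc, u_cov, chi_cov, sss_g, diag_metric, sss_diag; cbn [Nat.eqb];
  field; nz.
Qed.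



Lemma deriv_eq (I : R -> Prop) (f g : R -> R) (r a c : R) :
  (forall t, I t -> locally t I) -> (forall t, I t -> f t = g t) -> I r ->
  is_derive f r a -> is_derive g r c -> a = c.
Proof.
  intros Io Hfg Ir Hf Hg.
  rewrite <- (is_derive_unique _ _ _ Hf), <- (is_derive_unique _ _ _ Hg).
  apply Derive_ext_loc. apply (filter_imp I); auto.
Qed.

Lemma const_on (I : R -> Prop) (f : R -> R) (r0 r : R) :
  (forall a c t, I a -> I c -> a <= t <= c -> I t) ->
  (forall t, I t -> is_derive f t 0) -> I r0 -> I r -> f r = f r0.
Proof.
  intros Ic Hd I0 Ir.
  assert (HI : forall t, Rmin r0 r <= t <= Rmax r0 r -> I t).
  { intros t Ht. destruct (Rle_dec r0 r).
    - rewrite Rmin_left, Rmax_right in Ht by lra. eauto.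
    - rewrite Rmin_right, Rmax_left in Ht by lra. eauto. }
  destruct (MVT_gen f r0 r (fun _ => 0)) as [c [_ Hc]].
  - intros t Ht. apply Hd, HI; lra.
  - intros t Ht. apply continuity_pt_filterlim. apply (ex_derive_continuous (V := R_NormedModule)).
    eexists. apply Hd, HI; lra.
  - lra.
Qed.

Theorem proposition9 (b : R -> R) (r1 r2 : Rbar) (kappa1 kappa2 : R) :
  Rbar_le (Finite 0) r1 -> Rbar_lt r1 r2 ->
  (forall r, Rbar_lt r1 (Finite r) -> Rbar_lt (Finite r) r2 -> 0 < b r) ->
  (forall (n : nat) r, Rbar_lt r1 (Finite r) -> Rbar_lt (Finite r) r2 ->
     ex_derive_n b n r) ->
  let Lambda := - kappa1 in
  let lambda := - kappa2 in
  (forall x : coords,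
     Rbar_lt r1 (Finite (x 1%nat)) -> Rbar_lt (Finite (x 1%nat)) r2 ->
     0 < x 2%nat < PI ->
     forall k l : nat, (k < 4)%nat -> (l < 4)%nat ->
       einstein (sss_g b) (sss_ginv b) x k l = K_tensor b kappa1 kappa2 x k l)
  <->
  exists M : R, forall r, Rbar_lt r1 (Finite r) -> Rbar_lt (Finite r) r2 ->
     (b r) ^ 2 = 1 - 2 * M / r - Lambda / 3 * r ^ 2 - lambda / 5 * r ^ 4.
Proof.
  intros H0 H12 Hbp Hsm Lambda lambda. subst Lambda lambda.
  set (Iv := fun r : R => Rbar_lt r1 r /\ Rbar_lt r r2).
  assert (Io : forall t, Iv t -> locally t Iv).
  { intros t It. apply (open_and (fun u : R => Rbar_lt r1 u) (fun u : R => Rbar_lt u r2)).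
    apply open_Rbar_gt. apply open_Rbar_lt. exact It. }
  assert (Ic : forall a c t, Iv a -> Iv c -> a <= t <= c -> Iv t).
  { unfold Iv; intros a c t [Ha1 Ha2] [Hc1 Hc2] Ht.
    destruct r1, r2; simpl in *; split; auto; lra. }
  assert (Hr : forall t, Iv t -> 0 < t).
  { intros t [It _]. assert (H := Rbar_le_lt_trans _ _ _ H0 It). exact H. }
  assert (Hrn : forall t, Iv t -> t <> 0) by (intros t It; specialize (Hr t It); lra).
  assert (Hbn : forall t, Iv t -> b t <> 0) by (intros t [It1 It2]; specialize (Hbp t It1 It2); lra).
  set (db := Derive b). set (ddb := Derive db).
  assert (Hd : forall t, Iv t -> is_derive b t (db t)).
  { intros t [It1 It2]. apply Derive_correct. exact (Hsm 1%nat t It1 It2). }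
  assert (Hdd : forall t, Iv t -> is_derive db t (ddb t)).
  { intros t [It1 It2]. apply Derive_correct. exact (Hsm 2%nat t It1 It2). }
  assert (r0ex : exists r0, Iv r0).
  { unfold Iv. destruct r1 as [a| |], r2 as [c| |]; simpl in *; try tauto.
    - exists ((a + c) / 2). simpl; split; lra.
    - exists (a + 1). simpl; split; [lra | exact I]. }
  destruct r0ex as [r0 I0].
  split.
  - intros HE.
    set (phi := fun r => r * b r ^ 2 - r - kappa1 * r ^ 3 / 3 - kappa2 * r ^ 5 / 5).
    assert (Hphi : forall t, Iv t -> is_derive phi t 0).
    { intros t It.
      set (x := fun i : nat => match i with 1%nat => t | 2%nat => PI / 2 | _ => 0 end).
      assert (Ix : Iv (x 1%nat)) by exact It.
      assert (Hx := HE x (proj1 It) (proj2 It)).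
      assert (Hpi : 0 < x 2%nat < PI) by (simpl; pose proof PI_RGT_0; lra).
      specialize (Hx Hpi 0%nat 0%nat ltac:(lia) ltac:(lia)).
      assert (Hs2 : sin (x 2%nat) <> 0) by (simpl; rewrite sin_PI2; lra).
      rewrite (einstein_val Iv b db ddb x) in Hx; auto; try lia.
      rewrite K_val in Hx; auto; try lia.
      assert (Hx' : b t ^ 2 * (1 - b t ^ 2 - 2 * t * b t * db t) / t ^ 2
                    = - b t ^ 2 * (kappa1 + kappa2 * t ^ 2)) by exact Hx.
      assert (Hb0 := Hbn t It). assert (Ht0 := Hrn t It).
      assert (E : 1 - b t ^ 2 - 2 * t * b t * db t = - (kappa1 + kappa2 * t ^ 2) * t ^ 2).
      { apply (Rmult_eq_reg_l (b t ^ 2 / t ^ 2)). 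
        - replace (b t ^ 2 / t ^ 2 * (1 - b t ^ 2 - 2 * t * b t * db t))
            with (b t ^ 2 * (1 - b t ^ 2 - 2 * t * b t * db t) / t ^ 2) by (field; nz).
          rewrite Hx'. field. nz.
        - apply Rmult_integral_contrapositive_currified; [nz | apply Rinv_neq_0_compat; nz]. }
      unfold phi. auto_derive.
      + repeat split. eexists; apply Hd; exact It.
      + change (Derive (fun z => b z) t) with (db t). lra. }
    exists (- phi r0 / 2). intros r Ir1 Ir2.
    assert (Ir : Iv r) by (split; auto).
    assert (Hc := const_on Iv phi r0 r Ic Hphi I0 Ir).
    assert (Hr0 := Hrn r Ir).
    assert (Hb2 : b r ^ 2 = (phi r + r + kappa1 * r ^ 3 / 3 + kappa2 * r ^ 5 / 5) / r)
      by (unfold phi; field; exact Hr0).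
    rewrite Hb2, Hc. field. exact Hr0.
  - intros [M HM] x Ix1 Ix2 Hth k l Hk Hl.
    assert (Ix : Iv (x 1%nat)) by (split; auto).
    assert (Hs : sin (x 2%nat) <> 0) by (pose proof (sin_gt_0 _ (proj1 Hth) (proj2 Hth)); lra).
    rewrite (einstein_val Iv b db ddb x); auto.
    rewrite K_val; auto.
    set (F := fun r => 1 - 2 * M / r - - kappa1 / 3 * r ^ 2 - - kappa2 / 5 * r ^ 4).
    set (F1 := fun r => 2*M/r^2 + 2*kappa1*r/3 + 4*kappa2*r^3/5).
    set (F2 := fun r => -4*M/r^3 + 2*kappa1/3 + 12*kappa2*r^2/5).
    set (r := x 1%nat).
    assert (Hb0 := Hbn r Ix). assert (Hr0 := Hrn r Ix).
    assert (E0 : b r ^ 2 = F r) by (apply HM; apply Ix).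
    assert (E1 : 2 * b r * db r = F1 r).
    { apply (deriv_eq Iv (fun t => b t ^ 2) F r); auto.
      - intros t [It1 It2]. apply HM; auto.
      - auto_derive. + eexists; apply Hd; exact Ix.
        + change (Derive (fun z => b z) r) with (db r). ring.
      - unfold F, F1. auto_derive. + repeat split; nz. + field. nz. }
    assert (E2 : 2 * (db r ^ 2 + b r * ddb r) = F2 r).
    { apply (deriv_eq Iv (fun t => 2 * b t * db t) F1 r); auto.
      - intros t It. apply (deriv_eq Iv (fun t => b t ^ 2) F t); auto.
        + intros u [Iu1 Iu2]. apply HM; auto.
        + auto_derive. * eexists; apply Hd; exact It.
          * change (Derive (fun z => b z) t) with (db t). ring.
        + unfold F, F1. auto_derive. * repeat split; nz. apply Hrn; auto. * field. apply Hrn; auto.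
      - auto_derive. + repeat split; eexists; [apply Hd | apply Hdd]; exact Ix.
        + change (Derive (fun z => b z) r) with (db r). change (Derive (fun z => db z) r) with (ddb r). ring.
      - unfold F1, F2. auto_derive. + repeat split; nz. + field. nz. }
    unfold F, F1, F2 in *.
    destruct k as [|[|[|[|k]]]]; [| | | | lia];
    destruct l as [|[|[|[|l]]]]; try lia; unfold Ein, Kc; fold r; try reflexivity.
    + assert (N : 1 - b r ^ 2 - 2 * r * b r * db r = - (kappa1 + kappa2 * r ^ 2) * r ^ 2).
      { replace (2 * r * b r * db r) with (r * (2 * b r * db r)) by ring.
        rewrite E1, E0. field. nz. }
      rewrite N. field. nz.
    + assert (N : 2 * r * b r * db r + b r ^ 2 - 1 = (kappa1 + kappa2 * r ^ 2) * r ^ 2).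
      { replace (2 * r * b r * db r) with (r * (2 * b r * db r)) by ring.
        rewrite E1, E0. field. nz. }
      rewrite N. field. nz.
    + replace (db r ^ 2 + b r * ddb r) with ((2 * (db r ^ 2 + b r * ddb r)) / 2) by field.
      replace (2 * r * b r * db r) with (r * (2 * b r * db r)) by ring.
      rewrite E1, E2. field. nz.
    + replace (db r ^ 2 + b r * ddb r) with ((2 * (db r ^ 2 + b r * ddb r)) / 2) by field.
      replace (2 * r * b r * db r) with (r * (2 * b r * db r)) by ring.
      rewrite E1, E2. field. nz.
Qed.
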